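(* Let $\mathcal C$ be a pointed category with finite coproducts and $F\colon\mathcal C\to Gr$ a reduced functor. Then there is a natural isomorphism $\theta^F\colon T_1(IF)\to T_1F$ with $\theta^F(t_1(x-1))=t_1(x)$ for $X\in\mathcal C$ and $x\in F(X)$.
   Context: - $IF\colon\mathcal C\to Ab$ is the functor sending $X$ to the augmentation ideal $I(F(X))$ of the group ring $\mathbb Z[F(X)]$, i.e. the kernel of the augmentation $\mathbb Z[F(X)]\to\mathbb Z$. - For a reduced functor $G$ (to groups or abelian groups), $cr_2G(X,X)=\ker(G(X\vee X)\to G(X)\times G(X))$, induced by the retractions. - $T_1G(X)$ is the quotient of $G(X)$ by the (normal) image of $cr_2G(X,X)\subseteq G(X\vee X)$ under $G(\nabla)$, where $\nabla$ is the folding map; $t_1$ is the projection. $F$ is reduced if $F(0)$ is trivial. *)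

(* Defs.v *)
From HB Require Import structures.
From mathcomp Require Import all_boot all_algebra.
From mathcomp Require Import finmap monalg.

Set Implicit Arguments.
Unset Strict Implicit.
Unset Printing Implicit Defensive.

Import GRing.Theory.

Record category := Category {
  Obj :> Type;
  Hom : Obj -> Obj -> Type;
  idm : forall X, Hom X X;
  comp : forall X Y Z, Hom Y Z -> Hom X Y -> Hom X Z;
  comp_idl : forall X Y (f : Hom X Y), comp (idm Y) f = f;
  comp_idr : forall X Y (f : Hom X Y), comp f (idm X) = f;
  comp_assoc : forall X Y Z W (h : Hom Z W) (g : Hom Y Z) (f : Hom X Y),
      comp h (comp g f) = comp (comp h g) f
}.
Arguments idm {c} X.
Arguments comp {c X Y Z}.

(* A pointed category with finite coproducts: a zero object (initial and
   terminal), which is in particular the empty coproduct, and chosen binary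
   coproducts X \/ Y with their universal property. *)
Record pointed_cat := PointedCat {
  pc_cat :> category;
  zero_obj : pc_cat;
  to_zero : forall X : pc_cat, Hom X zero_obj;
  from_zero : forall X : pc_cat, Hom zero_obj X;
  to_zero_uniq : forall (X : pc_cat) (f : Hom X zero_obj), f = to_zero X;
  from_zero_uniq : forall (X : pc_cat) (f : Hom zero_obj X), f = from_zero X;
  coprod : pc_cat -> pc_cat -> pc_cat;
  inj1 : forall X Y : pc_cat, Hom X (coprod X Y);
  inj2 : forall X Y : pc_cat, Hom Y (coprod X Y);
  copair : forall X Y Z : pc_cat, Hom X Z -> Hom Y Z -> Hom (coprod X Y) Z;
  copair_inj1 : forall X Y Z (f : Hom X Z) (g : Hom Y Z),
      comp (copair f g) (inj1 X Y) = f;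
  copair_inj2 : forall X Y Z (f : Hom X Z) (g : Hom Y Z),
      comp (copair f g) (inj2 X Y) = g;
  copair_uniq : forall X Y Z (h : Hom (coprod X Y) Z),
      h = copair (comp h (inj1 X Y)) (comp h (inj2 X Y))
}.
Arguments copair {p X Y Z}.

Section PointedDefs.
Variable C : pointed_cat.

Definition zero_mor (X Y : C) : Hom X Y := comp (from_zero Y) (to_zero X).

Definition retr1 (X : C) : Hom (coprod X X) X := copair (idm X) (zero_mor X X).
Definition retr2 (X : C) : Hom (coprod X X) X := copair (zero_mor X X) (idm X).
Definition fold_map (X : C) : Hom (coprod X X) X := copair (idm X) (idm X).
End PointedDefs.

Record gr_functor (C : category) := GrFunctor {
  Fobj :> C -> groupType;
  Fmap : forall X Y : C, Hom X Y -> Fobj X -> Fobj Y;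
  Fmap_mul : forall X Y (f : Hom X Y) (x y : Fobj X),
      Fmap f (x * y)%g = (Fmap f x * Fmap f y)%g;
  Fmap_one : forall X Y (f : Hom X Y), Fmap f 1%g = 1%g;
  Fmap_id : forall X (x : Fobj X), Fmap (idm X) x = x;
  Fmap_comp : forall X Y Z (g : Hom Y Z) (f : Hom X Y) (x : Fobj X),
      Fmap (comp g f) x = Fmap g (Fmap f x)
}.
Arguments Fmap {C} _ {X Y}.

Definition reduced (C : pointed_cat) (F : gr_functor C) : Prop :=
  forall x : F (zero_obj C), x = 1%g.

Definition normal_subgroup (G : groupType) (N : G -> Prop) : Prop :=
  [/\ N 1%g,
      (forall x y, N x -> N y -> N (x * y)%g),
      (forall x, N x -> N (x^-1)%g) &
      (forall x g, N x -> N (g^-1 * x * g)%g)].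

Definition normal_closure (G : groupType) (S : G -> Prop) : G -> Prop :=
  fun x => forall N, normal_subgroup N -> (forall s, S s -> N s) -> N x.

Section T1Gr.
Variables (C : pointed_cat) (F : gr_functor C).

(* cr_2 F (X, X) = ker (F(X \/ X) -> F(X) x F(X)) *)
Definition cr2 (X : C) : F (coprod X X) -> Prop :=
  fun u => Fmap F (retr1 X) u = 1%g /\ Fmap F (retr2 X) u = 1%g.

Definition T1_kernel (X : C) : F X -> Prop :=
  normal_closure (fun y => exists2 u, cr2 u & y = Fmap F (fold_map X) u).

(* equality in T_1 F (X) = F(X) / T1_kernel X, on representatives:
   t_1 x = t_1 y  <->  x y^-1 in the kernel *)
Definition T1_eq (X : C) (x y : F X) : Prop := T1_kernel (x * y^-1)%g.
End T1Gr.
Arguments cr2 {C} F {X}.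
Arguments T1_kernel {C} F {X}.
Arguments T1_eq {C} F {X}.

(* The functor IF : C -> Ab.  Z[G] is the group ring (only its additive
   group is used), realised as the free Z-module {malg int[G]}. *)

Local Open Scope ring_scope.

Definition ZG (G : groupType) := {malg int[G]}.

Definition Zmap (G H : groupType) (f : G -> H) (a : ZG G) : ZG H :=
  \sum_(k <- msupp a) << a@_k *g f k >>.

Definition augm (G : groupType) (a : ZG G) : int := \sum_(k <- msupp a) a@_k.

Definition aug_ideal (G : groupType) (a : ZG G) : Prop := augm a = 0.

Section T1IF.
Variables (C : pointed_cat) (F : gr_functor C).

Definition IF (X : C) : ZG (F X) -> Prop := @aug_ideal (F X).
Definition IFmap (X Y : C) (f : Hom X Y) : ZG (F X) -> ZG (F Y) :=
  Zmap (Fmap F f).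

Definition subgroup_closure (G : zmodType) (S : G -> Prop) : G -> Prop :=
  fun x => forall N : G -> Prop, N 0 -> (forall a b, N a -> N b -> N (a - b)) ->
            (forall s, S s -> N s) -> N x.

Definition cr2_IF (X : C) : ZG (F (coprod X X)) -> Prop :=
  fun u => [/\ IF u, IFmap (retr1 X) u = 0 & IFmap (retr2 X) u = 0].

(* image of cr_2 IF (X,X) in IF(X) under IF(fold) (normal since abelian) *)
Definition T1IF_kernel (X : C) : ZG (F X) -> Prop :=
  subgroup_closure (fun y => exists2 u, cr2_IF u & y = IFmap (fold_map X) u).

Definition T1IF_eq (X : C) (a b : ZG (F X)) : Prop := T1IF_kernel (a - b).
End T1IF.
Arguments IF {C} F {X}.
Arguments IFmap {C} F {X Y}.
Arguments cr2_IF {C} F {X}.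
Arguments T1IF_kernel {C} F {X}.
Arguments T1IF_eq {C} F {X}.

(* A natural isomorphism theta : T_1(IF) -> T_1 F with
   theta (t_1 (x - 1)) = t_1 x, presented on representatives: theta X maps a
   representative a in IF(X) to a representative in F(X); it must be
   well defined on classes, additive -> multiplicative, bijective on classes,
   natural, and satisfy the formula. *)
Definition T1_natural_iso (C : pointed_cat) (F : gr_functor C)
    (theta : forall X : C, ZG (F X) -> F X) : Prop :=
  [/\
      (forall X (a b : ZG (F X)), IF F a -> IF F b ->
          T1IF_eq F a b -> T1_eq F (theta X a) (theta X b)),
      (forall X (a b : ZG (F X)), IF F a -> IF F b ->
          T1_eq F (theta X (a + b)) (theta X a * theta X b)%g),
      (forall X (a b : ZG (F X)), IF F a -> IF F b ->
          T1_eq F (theta X a) (theta X b) -> T1IF_eq F a b),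
      (forall X (y : F X), exists2 a, IF F a & T1_eq F (theta X a) y) &
      ((
      forall X Y (f : Hom X Y) (a : ZG (F X)), IF F a ->
          T1_eq F (Fmap F f (theta X a)) (theta Y (IFmap F f a))) /\
      (forall X (x : F X), T1_eq F (theta X (<< x >> - << 1%g >>)) x))].

(* Main.v *)
Require Import Defs.
From HB Require Import structures.
From mathcomp Require Import all_boot all_algebra zify.
From mathcomp Require Import finmap monalg.
From Stdlib Require Import Setoid Morphisms.
Set Implicit Arguments. Unset Strict Implicit. Unset Printing Implicit Defensive.
Import GRing.Theory.
Section Zpow.
Variable G : groupType.
Local Open Scope group_scope.
Definition zpow (x : G) (z : int) : G :=
  match z with Posz n => x ^+ n | Negz n => (x ^+ n.+1)^-1 end.
Lemma zpowS x z : zpow x (z + 1)%R = zpow x z * x.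
Proof.
case: z => [n|[|m]].
- have -> : (Posz n + 1)%R = Posz n.+1 by lia.
  by rewrite /= expgSr.
- have -> : (Negz 0 + 1 = 0)%R by [].
  by rewrite /= expg1 mulVg.
- have -> : (Negz m.+1 + 1)%R = Negz m by rewrite !NegzE; lia.
  by rewrite /= [x ^+ m.+2]expgS invgM mulgVK.
Qed.
Lemma zpowDn x a n : zpow x (a + n%:Z)%R = zpow x a * x ^+ n.
Proof.
elim: n => [|n IH]; first by rewrite addr0 mulg1.
have -> : (a + n.+1%:Z = (a + n%:Z) + 1)%R by lia.
by rewrite zpowS IH expgSr mulgA.
Qed.
Lemma zpowD x a b : zpow x (a + b)%R = zpow x a * zpow x b.
Proof.
case: b => [n|n]; first exact: zpowDn.
have := zpowDn x (a + Negz n)%R n.+1.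
have -> : (a + Negz n + n.+1%:Z = a)%R by rewrite NegzE; lia.
by move=> ->; rewrite /= mulgK.
Qed.
End Zpow.

Definition prodl (G : groupType) (I : Type) (s : seq I) (f : I -> G) : G :=
  foldr (fun i acc => (f i * acc)%g) 1%g s.

Lemma prodl_cat (G : groupType) (I : Type) (s t : seq I) (f : I -> G) :
  prodl (s ++ t) f = (prodl s f * prodl t f)%g.
Proof. by elim: s => [|x s IH] /=; rewrite ?mul1g // IH mulgA. Qed.

Lemma prodl_filter (G : groupType) (I : Type) (P : pred I) (s : seq I) (f : I -> G) :
  (forall i, ~~ P i -> f i = 1%g) -> prodl s f = prodl (filter P s) f.
Proof.
move=> h; elim: s => [|x s IH] //=; case: ifP => Px /=; rewrite IH //.
by rewrite h ?Px // mul1g.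
Qed.

Local Open Scope ring_scope.

Lemma sum_incl (V : zmodType) (I : eqType) (r s : seq I) (F : I -> V) :
  uniq r -> uniq s -> {subset r <= s} -> (forall i, i \notin r -> F i = 0) ->
  \sum_(i <- r) F i = \sum_(i <- s) F i.
Proof.
move=> ur us sub h.
rewrite [RHS](bigID (fun i => i \in r)) /= [X in _ + X]big1 ?addr0; last first.
  by move=> i /h.
rewrite -[RHS]big_filter; apply: perm_big; apply: uniq_perm => //; first exact: filter_uniq.
move=> i; rewrite mem_filter; case: (boolP (i \in r)) => //= /sub ->.
by [].
Qed.

Section ZGlemmas.
Variables (G H : groupType) (f : G -> H).
Implicit Types (a b : ZG G).

Lemma Zmapw a (s : seq G) : uniq s -> {subset msupp a <= s} ->
  Zmap f a = \sum_(k <- s) << a@_k *g f k >>.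
Proof.
move=> us sub; rewrite /Zmap; apply: sum_incl => //.
by move=> k /mcoeff_outdom ->; rewrite monalgU0.
Qed.

Lemma augmw a (s : seq G) : uniq s -> {subset msupp a <= s} ->
  augm a = \sum_(k <- s) a@_k.
Proof.
move=> us sub; rewrite /augm; apply: sum_incl => //.
by move=> k /mcoeff_outdom ->.
Qed.

Definition unionl a b : seq G := undup (msupp a ++ msupp b ++ msupp (a + b)).
Lemma unionl_uniq a b : uniq (unionl a b). Proof. exact: undup_uniq. Qed.
Lemma unionl_sub1 a b : {subset msupp a <= unionl a b}.
Proof. by move=> k hk; rewrite mem_undup !mem_cat hk. Qed.
Lemma unionl_sub2 a b : {subset msupp b <= unionl a b}.
Proof. by move=> k hk; rewrite mem_undup !mem_cat hk orbT. Qed.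
Lemma unionl_sub3 a b : {subset msupp (a + b) <= unionl a b}.
Proof. by move=> k hk; rewrite mem_undup !mem_cat hk !orbT. Qed.

Lemma ZmapD a b : Zmap f (a + b) = Zmap f a + Zmap f b.
Proof.
rewrite (Zmapw (@unionl_uniq a b) (@unionl_sub3 a b)).
rewrite (Zmapw (@unionl_uniq a b) (@unionl_sub1 a b)).
rewrite (Zmapw (@unionl_uniq a b) (@unionl_sub2 a b)).
by rewrite -big_split; apply: eq_bigr => k _; rewrite mcoeffD monalgUD.
Qed.

Lemma augmD a b : augm (a + b) = augm a + augm b.
Proof.
rewrite (augmw (@unionl_uniq a b) (@unionl_sub3 a b)).
rewrite (augmw (@unionl_uniq a b) (@unionl_sub1 a b)).
rewrite (augmw (@unionl_uniq a b) (@unionl_sub2 a b)).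
by rewrite -big_split; apply: eq_bigr => k _; rewrite mcoeffD.
Qed.

Lemma ZmapN a : Zmap f (- a) = - Zmap f a.
Proof.
rewrite /Zmap msuppN -sumrN; apply: eq_bigr => k _.
by rewrite mcoeffN monalgUN.
Qed.

Lemma augmN a : augm (- a) = - augm a.
Proof.
rewrite /augm msuppN -sumrN; apply: eq_bigr => k _.
by rewrite mcoeffN.
Qed.

Lemma ZmapB a b : Zmap f (a - b) = Zmap f a - Zmap f b.
Proof. by rewrite ZmapD ZmapN. Qed.
Lemma augmB a b : augm (a - b) = augm a - augm b.
Proof. by rewrite augmD augmN. Qed.

Lemma ZmapU (c : int) (k : G) : Zmap f << c *g k >> = << c *g f k >>.
Proof.
rewrite (@Zmapw _ [:: k]) //; last first.
  move=> k' /(fsubsetP msuppU_le); by rewrite in_fset1 inE.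
by rewrite big_seq1 mcoeffUU.
Qed.

Lemma augmU (c : int) (k : G) : augm << c *g k >> = c.
Proof.
rewrite (@augmw _ [:: k]) //; last first.
  move=> k' /(fsubsetP msuppU_le); by rewrite in_fset1 inE.
by rewrite big_seq1 mcoeffUU.
Qed.
End ZGlemmas.

Section Closure.
Variables (V : zmodType) (S : V -> Prop).
Local Notation Ker := (subgroup_closure S).
Lemma ker0 : Ker 0. Proof. by move=> N N0 NB NS. Qed.
Lemma kerB a b : Ker a -> Ker b -> Ker (a - b).
Proof. by move=> ha hb N N0 NB NS; apply: (NB); [exact: (ha N N0 NB NS) | exact: (hb N N0 NB NS)]. Qed.
Lemma kerS s : S s -> Ker s.
Proof. by move=> hs N N0 NB NS; exact: NS. Qed.
Lemma kerN a : Ker a -> Ker (- a).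
Proof. by move=> ha; rewrite -sub0r; apply: kerB => //; exact: ker0. Qed.
Lemma kerD a b : Ker a -> Ker b -> Ker (a + b).
Proof. by move=> ha hb; rewrite -[b]opprK; apply: kerB => //; apply: kerN. Qed.
Lemma ker_sum (I : Type) (r : seq I) (F : I -> V) :
  (forall i, Ker (F i)) -> Ker (\sum_(i <- r) F i).
Proof.
move=> h; elim: r => [|x r IH]; first by rewrite big_nil; exact: ker0.
by rewrite big_cons; apply: kerD.
Qed.
End Closure.

Section ZGalg.
Variable (G : groupType).
Implicit Types a b c : ZG G.
Lemma ZGsubrr a : a - a = 0. Proof. exact: subrr. Qed.
Lemma ZGsub0r a : 0 - a = - a. Proof. exact: sub0r. Qed.
Lemma ZGaddNr a : - a + a = 0. Proof. exact: addNr. Qed.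
Lemma ZGaddrAC a b c : a + b + c = a + c + b. Proof. exact: addrAC. Qed.
End ZGalg.
Lemma ZG_c1 (G : groupType) (a b : ZG G) : a - a - b + b = 0.
Proof. by rewrite subrr sub0r addNr. Qed.
Lemma ZG_c2 (G : groupType) (a b : ZG G) : a - b - a + b = 0.
Proof. by rewrite [a - b - a]addrAC subrr sub0r addNr. Qed.
Lemma u1 (G : groupType) (k : G) (c : int) : (<< k >> : ZG G) *~ c = << c *g k >>.
Proof. by rewrite -raddfMz /= intz. Qed.
Lemma u2 (G : groupType) (a : ZG G) (Fk : G -> ZG G) :
  \sum_(i <- msupp a) (<< a@_i *g i >> - Fk i) = a - \sum_(i <- msupp a) Fk i.
Proof. by rewrite sumrB -monalgE. Qed.
Lemma u3 (G : groupType) (a : ZG G) :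
  \sum_(i <- msupp a) << a@_i *g 1%g >> = << augm a *g 1%g >> :> ZG G.
Proof. by rewrite -raddf_sum. Qed.

Section Main.
Variables (C : pointed_cat) (F : gr_functor C).
Hypothesis hred : reduced F.
Local Open Scope group_scope.

Lemma FmapC (X Y Z : C) (g : Defs.Hom Y Z) (f : Defs.Hom X Y) x :
  Fmap F g (Fmap F f x) = Fmap F (Defs.comp g f) x.
Proof. by rewrite Fmap_comp. Qed.

Lemma Fmap_inv (X Y : C) (f : Defs.Hom X Y) (x : F X) : Fmap F f x^-1 = (Fmap F f x)^-1.
Proof.
apply/esym/mulg1_eq; by rewrite -Fmap_mul mulgV Fmap_one.
Qed.

Lemma Fmap_expg (X Y : C) (f : Defs.Hom X Y) (x : F X) n :
  Fmap F f (x ^+ n) = (Fmap F f x) ^+ n.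
Proof.
elim: n => [|n IH]; first by rewrite !expg0 Fmap_one.
by rewrite !expgS Fmap_mul IH.
Qed.

Lemma Fmap_zpow (X Y : C) (f : Defs.Hom X Y) (x : F X) z :
  Fmap F f (zpow x z) = zpow (Fmap F f x) z.
Proof. by case: z => n /=; rewrite ?Fmap_inv Fmap_expg. Qed.

Lemma Fmap_prodl (X Y : C) (f : Defs.Hom X Y) (I : Type) (s : seq I) (g : I -> F X) :
  Fmap F f (prodl s g) = prodl s (fun i => Fmap F f (g i)).
Proof. by elim: s => [|i s IH] /=; rewrite ?Fmap_one // Fmap_mul IH. Qed.

Lemma Fmap_zero (X Y : C) (x : F X) : Fmap F (zero_mor X Y) x = 1.
Proof. by rewrite /zero_mor Fmap_comp (hred (Fmap F _ x)) Fmap_one. Qed.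

Lemma r1i1 (X : C) (x : F X) : Fmap F (retr1 X) (Fmap F (inj1 X X) x) = x.
Proof. by rewrite FmapC /retr1 copair_inj1 Fmap_id. Qed.
Lemma r1i2 (X : C) (x : F X) : Fmap F (retr1 X) (Fmap F (inj2 X X) x) = 1.
Proof. by rewrite FmapC /retr1 copair_inj2 Fmap_zero. Qed.
Lemma r2i1 (X : C) (x : F X) : Fmap F (retr2 X) (Fmap F (inj1 X X) x) = 1.
Proof. by rewrite FmapC /retr2 copair_inj1 Fmap_zero. Qed.
Lemma r2i2 (X : C) (x : F X) : Fmap F (retr2 X) (Fmap F (inj2 X X) x) = x.
Proof. by rewrite FmapC /retr2 copair_inj2 Fmap_id. Qed.
Lemma fi1 (X : C) (x : F X) : Fmap F (fold_map X) (Fmap F (inj1 X X) x) = x.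
Proof. by rewrite FmapC /fold_map copair_inj1 Fmap_id. Qed.
Lemma fi2 (X : C) (x : F X) : Fmap F (fold_map X) (Fmap F (inj2 X X) x) = x.
Proof. by rewrite FmapC /fold_map copair_inj2 Fmap_id. Qed.

Lemma normal_closure_normal (G : groupType) (S : G -> Prop) :
  normal_subgroup (normal_closure S).
Proof.
split.
- by move=> N [N1 _ _ _] _.
- move=> x y hx hy N hN hS; have [_ NM _ _] := hN.
  exact: NM (hx N hN hS) (hy N hN hS).
- move=> x hx N hN hS; have [_ _ NV _] := hN; exact: NV (hx N hN hS).
- move=> x g hx N hN hS; have [_ _ _ NJ] := hN; exact: NJ (hx N hN hS).
Qed.

Lemma KX_gen (X : C) (u : F (coprod X X)) : cr2 F u ->
  T1_kernel F (Fmap F (fold_map X) u).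
Proof. by move=> hu N hN hS; apply: hS; exists u. Qed.

Lemma KX_comm (X : C) (x y : F X) : T1_kernel F (x * y * (y * x)^-1).
Proof.
pose u := Fmap F (inj1 X X) x * Fmap F (inj2 X X) y *
          (Fmap F (inj2 X X) y * Fmap F (inj1 X X) x)^-1.
have -> : x * y * (y * x)^-1 = Fmap F (fold_map X) u.
  by rewrite /u !(Fmap_mul, Fmap_inv) !(fi1, fi2).
apply: KX_gen; split.
  by rewrite /u !(Fmap_mul, Fmap_inv) !(r1i1, r1i2) mulg1 mul1g mulgV.
by rewrite /u !(Fmap_mul, Fmap_inv) !(r2i1, r2i2) mulg1 mul1g mulgV.
Qed.

Definition theta (X : C) (a : ZG (F X)) : F X :=
  prodl (msupp a) (fun k => zpow k (a@_k)).

Section Obj.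
Variable Y : C.
Local Notation K := (@T1_kernel C F Y).
Definition eqY (x y : F Y) := T1_eq F x y.

Let hN := normal_closure_normal
  (fun y : F Y => exists2 u, cr2 F u & y = Fmap F (fold_map Y) u).
Lemma K1 : K 1. Proof. by case: hN. Qed.
Lemma KM x y : K x -> K y -> K (x * y). Proof. by case: hN => _ h _ _; apply: h. Qed.
Lemma KV x : K x -> K x^-1. Proof. by case: hN => _ _ h _; apply: h. Qed.
Lemma KJ x g : K x -> K (g^-1 * x * g). Proof. by case: hN => _ _ _ h; apply: h. Qed.

Lemma eqY_refl x : eqY x x.
Proof. by rewrite /eqY /T1_eq mulgV; exact: K1. Qed.
Lemma eqY_sym x y : eqY x y -> eqY y x.
Proof. by move=> /KV; rewrite /eqY /T1_eq invgM invgK. Qed.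
Lemma eqY_trans x y z : eqY x y -> eqY y z -> eqY x z.
Proof. by move=> h1 h2; move: (KM h1 h2); rewrite /eqY /T1_eq mulgA mulgVK. Qed.
#[local] Instance eqY_equiv : Equivalence eqY.
Proof. split; [exact eqY_refl| exact eqY_sym | exact eqY_trans]. Qed.
Lemma eqY_mul x x' y y' : eqY x x' -> eqY y y' -> eqY (x * y) (x' * y').
Proof.
move=> h1 h2; rewrite /eqY /T1_eq.
have := KM (KJ x^-1 h2) h1; rewrite invgK invgM !mulgA.
by rewrite mulgVK.
Qed.
#[local] Instance mulY_proper : Proper (eqY ==> eqY ==> eqY) (@monoid.mul (F Y)).
Proof. by move=> x x' h y y' h'; apply: eqY_mul. Qed.
Lemma eqY_inv x y : eqY x y -> eqY x^-1 y^-1.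
Proof.
by move=> /eqY_sym h; have := KJ x h; rewrite /eqY /T1_eq invgK !mulgA mulgVK.
Qed.
#[local] Instance invY_proper : Proper (eqY ==> eqY) (@monoid.inv (F Y)).
Proof. by move=> x x' h; apply: eqY_inv. Qed.
Lemma eqY_comm x y : eqY (x * y) (y * x). Proof. exact: KX_comm. Qed.
Lemma eqY1 x : eqY x 1 <-> K x. Proof. by rewrite /eqY /T1_eq invg1 mulg1. Qed.
Lemma eqY_K x y : eqY x y -> K y -> K x.
Proof. by move=> h1 h2; have := KM h1 h2; rewrite mulgVK. Qed.

Lemma prodl_perm (I : eqType) (s t : seq I) f :
  perm_eq s t -> eqY (prodl s f) (prodl t f).
Proof.
elim: s t => [|x s IH] t hp.
  case: t hp => [|y t] hp; first exact: eqY_refl.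
  by have := perm_size hp.
have xt : x \in t by rewrite -(perm_mem hp) mem_head.
case/splitPr: xt hp => t1 t2 hp.
have hp' : perm_eq s (t1 ++ t2).
  by rewrite -(perm_cons x) (perm_trans hp) // -cat1s perm_catCA.
have -> : prodl (x :: s) f = f x * prodl s f by [].
have -> : prodl (t1 ++ x :: t2) f = prodl t1 f * (f x * prodl t2 f) by rewrite prodl_cat.
rewrite (IH _ hp') prodl_cat !mulgA.
by rewrite (eqY_comm (f x)); reflexivity.
Qed.

Lemma prodl_mul (I : Type) (s : seq I) (f g : I -> F Y) :
  eqY (prodl s (fun i => f i * g i)) (prodl s f * prodl s g).
Proof.
elim: s => [|x s IH] /=; first by rewrite mulg1; reflexivity.
rewrite IH !mulgA -[f x * g x * prodl s f]mulgA (eqY_comm (g x)).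
by rewrite !mulgA; reflexivity.
Qed.

Lemma prodl_eqY (I : Type) (s : seq I) (f g : I -> F Y) :
  (forall i, eqY (f i) (g i)) -> eqY (prodl s f) (prodl s g).
Proof. by move=> h; elim: s => [|x s IH] /=; [reflexivity|rewrite IH h; reflexivity]. Qed.

Lemma prodl_ext (I : Type) (s : seq I) (f g : I -> F Y) :
  (forall i, f i = g i) -> prodl s f = prodl s g.
Proof. by move=> h; elim: s => [|x s IH] //=; rewrite IH h. Qed.

Lemma prodl_incl (I : eqType) (r s : seq I) (f : I -> F Y) :
  uniq r -> uniq s -> {subset r <= s} -> (forall i, i \notin r -> f i = 1) ->
  eqY (prodl r f) (prodl s f).
Proof.
move=> ur us sub h; rewrite (@prodl_filter (F Y) I (fun i => i \in r) s f h).
apply: prodl_perm; apply: uniq_perm => //; first exact: filter_uniq.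
move=> i; rewrite mem_filter /=; case: (boolP (i \in r)) => //= /sub ->.
by [].
Qed.

Lemma thetaw (a : ZG (F Y)) (s : seq (F Y)) : uniq s -> {subset msupp a <= s} ->
  eqY (theta a) (prodl s (fun k => zpow k (a@_k))).
Proof.
move=> us sub; apply: prodl_incl => //.
by move=> k /mcoeff_outdom ->.
Qed.

Lemma thetaD (a b : ZG (F Y)) : eqY (theta (a + b)%R) (theta a * theta b).
Proof.
rewrite (thetaw (@unionl_uniq _ a b) (@unionl_sub3 _ a b)).
rewrite (thetaw (@unionl_uniq _ a b) (@unionl_sub1 _ a b)).
rewrite (thetaw (@unionl_uniq _ a b) (@unionl_sub2 _ a b)).
rewrite -prodl_mul (@prodl_ext _ _ _ (fun k => zpow k a@_k * zpow k b@_k)).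
  reflexivity.
by move=> k; rewrite mcoeffD zpowD.
Qed.

Lemma theta0 : eqY (theta (0 : ZG (F Y))) 1.
Proof.
rewrite (@thetaw 0 [::]) //; first reflexivity.
by move=> k; rewrite msupp0 in_fset0.
Qed.

Lemma thetaN (a : ZG (F Y)) : eqY (theta (- a)%R) (theta a)^-1.
Proof.
have h : eqY (theta a * theta (- a)%R) 1.
  by rewrite -thetaD subrr theta0; reflexivity.
rewrite -[theta (- a)%R]mul1g -(mulVg (theta a)) -mulgA h mulg1; reflexivity.
Qed.

Lemma thetaB (a b : ZG (F Y)) : eqY (theta (a - b)%R) (theta a * (theta b)^-1).
Proof. by rewrite thetaD thetaN; reflexivity. Qed.

Lemma thetaU (c : int) (k : F Y) : eqY (theta << c *g k >>) (zpow k c).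
Proof.
rewrite (@thetaw _ [:: k]) //=; first by rewrite mcoeffUU mulg1; reflexivity.
by move=> k' /(fsubsetP msuppU_le); rewrite in_fset1 inE.
Qed.

Lemma theta_sum (I : Type) (r : seq I) (G : I -> ZG (F Y)) :
  eqY (theta (\sum_(i <- r) G i)%R) (prodl r (fun i => theta (G i))).
Proof.
elim: r => [|i r IH]; first by rewrite big_nil theta0; reflexivity.
by rewrite big_cons thetaD IH; reflexivity.
Qed.

Lemma theta_nat (X : C) (f : Defs.Hom X Y) (a : ZG (F X)) :
  eqY (Fmap F f (theta a)) (theta (IFmap F f a)).
Proof.
rewrite /IFmap /Zmap theta_sum [theta a]/theta Fmap_prodl.
apply: prodl_eqY => k; rewrite thetaU Fmap_zpow; reflexivity.
Qed.


Local Open Scope ring_scope.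
Definition psi (x : F Y) : ZG (F Y) := << x >> - << 1%g >>.
Local Notation KI := (@T1IF_kernel C F Y).
Definition eqI (a b : ZG (F Y)) := T1IF_eq F a b.

Lemma KI0 : KI 0. Proof. exact: ker0. Qed.
Lemma KIB a b : KI a -> KI b -> KI (a - b). Proof. exact: kerB. Qed.
Lemma KIN a : KI a -> KI (- a). Proof. exact: kerN. Qed.
Lemma KID a b : KI a -> KI b -> KI (a + b). Proof. exact: kerD. Qed.

Lemma eqI_refl a : eqI a a. Proof. by rewrite /eqI /T1IF_eq subrr; exact: KI0. Qed.
Lemma eqI_sym a b : eqI a b -> eqI b a.
Proof. by move=> /KIN; rewrite /eqI /T1IF_eq opprB. Qed.
Lemma eqI_trans a b c : eqI a b -> eqI b c -> eqI a c.
Proof. by move=> h1 h2; have := KID h1 h2; rewrite /eqI /T1IF_eq addrA subrK. Qed.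
#[local] Instance eqI_equiv : Equivalence eqI.
Proof. split; [exact eqI_refl| exact eqI_sym | exact eqI_trans]. Qed.
Lemma eqI_add a a' b b' : eqI a a' -> eqI b b' -> eqI (a + b) (a' + b').
Proof. by move=> h1 h2; have := KID h1 h2; rewrite /eqI /T1IF_eq opprD addrACA. Qed.
#[local] Instance addI_proper : Proper (eqI ==> eqI ==> eqI) (@GRing.add (ZG (F Y))).
Proof. by move=> x x' h y y' h'; apply: eqI_add. Qed.
Lemma eqI_opp a b : eqI a b -> eqI (- a) (- b).
Proof. by move=> /KIN; rewrite /eqI /T1IF_eq opprD. Qed.
#[local] Instance oppI_proper : Proper (eqI ==> eqI) (@GRing.opp (ZG (F Y))).
Proof. by move=> x x' h; apply: eqI_opp. Qed.
Lemma eqI_KI a b : eqI a b -> KI b -> KI a.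
Proof. by move=> h1 h2; have := KID h1 h2; rewrite subrK. Qed.
Lemma KI_eqI a : KI a -> eqI a 0.
Proof. by rewrite /eqI /T1IF_eq subr0. Qed.

Lemma zid (V : zmodType) (p q r o : V) : p - o - ((q - o) + (r - o)) = p - q - r + o.
Proof. rewrite opprD !opprB. rewrite !addrA. rewrite subrK. by rewrite addrAC. Qed.

Lemma psiM x y : eqI (psi (x * y)%g) (psi x + psi y).
Proof.
pose i1 := Fmap F (inj1 Y Y); pose i2 := Fmap F (inj2 Y Y).
pose u : ZG (F (coprod Y Y)) :=
  << (i1 x * i2 y)%g >> - << i1 x >> - << i2 y >> + << 1%g >>.
rewrite /eqI /T1IF_eq /psi zid.
apply: kerS; exists u.
  split.
  - rewrite /IF /aug_ideal /u !(augmD, augmN, augmU). Show. lia.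
  - rewrite /IFmap /u !(ZmapD, ZmapN, ZmapU) Fmap_mul /i1 /i2 r1i1 r1i2 mulg1 Fmap_one.
    exact: ZG_c1.
  - rewrite /IFmap /u !(ZmapD, ZmapN, ZmapU) Fmap_mul /i1 /i2 r2i1 r2i2 mul1g Fmap_one.
    exact: ZG_c2.
by rewrite /IFmap /u !(ZmapD, ZmapN, ZmapU) Fmap_mul /i1 /i2 fi1 fi2 Fmap_one.
Qed.

Lemma psi1 : psi 1%g = 0. Proof. by rewrite /psi subrr. Qed.

Lemma psiV x : eqI (psi x^-1%g) (- psi x).
Proof.
have h := psiM x^-1%g x; rewrite mulVg psi1 in h.
rewrite -[psi x^-1%g](addrK (psi x)) -h sub0r; reflexivity.
Qed.

Lemma psi_gen (u : F (coprod Y Y)) : cr2 F u -> KI (psi (Fmap F (fold_map Y) u)).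
Proof.
case=> h1 h2; apply: kerS; exists (<< u >> - << 1%g >>).
  split.
  - rewrite /IF /aug_ideal !(augmD, augmN, augmU); lia.
  - rewrite /IFmap !(ZmapD, ZmapN, ZmapU) h1 Fmap_one; exact: subrr.
  - rewrite /IFmap !(ZmapD, ZmapN, ZmapU) h2 Fmap_one; exact: subrr.
by rewrite /IFmap !(ZmapD, ZmapN, ZmapU) Fmap_one.
Qed.

Lemma psi_norm : normal_subgroup (fun x => KI (psi x)).
Proof.
split.
- by rewrite psi1; exact: KI0.
- by move=> x y hx hy; apply: eqI_KI (psiM x y) (KID hx hy).
- by move=> x hx; apply: eqI_KI (psiV x) (KIN hx).
- move=> x g hx; apply: eqI_KI hx.
  rewrite psiM psiM psiV addrC addNKr; reflexivity.
Qed.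

Lemma K_psi x : K x -> KI (psi x).
Proof.
move=> hx; apply: (hx _ psi_norm).
by move=> y [u hu ->]; apply: psi_gen.
Qed.

Lemma psi_eq x y : eqY x y -> eqI (psi x) (psi y).
Proof.
move=> /K_psi /KI_eqI h.
rewrite -[x](mulgVK y) psiM h add0r; reflexivity.
Qed.

Lemma sum_eqI (I : Type) (r : seq I) (f g : I -> ZG (F Y)) :
  (forall i, eqI (f i) (g i)) -> eqI (\sum_(i <- r) f i) (\sum_(i <- r) g i).
Proof.
move=> h; elim: r => [|i r IH]; first by rewrite !big_nil; reflexivity.
by rewrite !big_cons IH h; reflexivity.
Qed.

Lemma psi_prodl (I : Type) (s : seq I) (g : I -> F Y) :
  eqI (psi (prodl s g)) (\sum_(i <- s) psi (g i)).
Proof.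
elim: s => [|i s IH]; first by rewrite big_nil /= psi1; reflexivity.
by rewrite big_cons /= psiM IH; reflexivity.
Qed.

Lemma psi_expg x n : eqI (psi (x ^+ n)%g) (psi x *+ n).
Proof.
elim: n => [|n IH]; first by rewrite expg0 psi1 mulr0n; reflexivity.
by rewrite expgS psiM IH mulrS; reflexivity.
Qed.

Lemma psi_zpow x z : eqI (psi (zpow x z)) (psi x *~ z).
Proof.
case: z => n /=; first by rewrite psi_expg pmulrn; reflexivity.
by rewrite psiV psi_expg NegzE mulrNz pmulrn; reflexivity.
Qed.

Lemma psi_theta (a : ZG (F Y)) : IF F a -> eqI (psi (theta a)) a.
Proof.
move=> ha; rewrite /theta psi_prodl.
rewrite (sum_eqI _ (fun k => psi_zpow k a@_k)).
have -> : \sum_(k <- msupp a) psi k *~ a@_k = a.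
  rewrite (eq_bigr (fun k => << a@_k *g k >> - << a@_k *g 1%g >>)); last first.
    by move=> k _; rewrite /psi mulrzBl !u1.
  rewrite u2 u3.
  by move: ha; rewrite /IF /aug_ideal => ->; rewrite monalgU0 subr0.
reflexivity.
Qed.

Lemma theta_gen (u : ZG (F (coprod Y Y))) : cr2_IF F u ->
  K (theta (IFmap F (fold_map Y) u)).
Proof.
case=> _ hu1 hu2.
set w := theta u.
have h1 : K (Fmap F (retr1 Y) w).
  by apply/eqY1; rewrite theta_nat hu1 theta0; reflexivity.
have h2 : K (Fmap F (retr2 Y) w).
  by apply/eqY1; rewrite theta_nat hu2 theta0; reflexivity.
pose v := (w * (Fmap F (inj1 Y Y) (Fmap F (retr1 Y) w))^-1 *
          (Fmap F (inj2 Y Y) (Fmap F (retr2 Y) w))^-1)%g.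
have hv : K (Fmap F (fold_map Y) v).
  apply: KX_gen; split.
    by rewrite /v !(Fmap_mul, Fmap_inv) r1i1 r1i2 invg1 mulg1 mulgV.
  by rewrite /v !(Fmap_mul, Fmap_inv) r2i1 r2i2 invg1 mulg1 mulgV.
have hf : K (Fmap F (fold_map Y) w).
  have -> : Fmap F (fold_map Y) w =
    (Fmap F (fold_map Y) v * Fmap F (retr2 Y) w * Fmap F (retr1 Y) w)%g.
    by rewrite /v !(Fmap_mul, Fmap_inv) fi1 fi2 mulgVK mulgVK.
  by apply: KM; [apply: KM|].
apply: eqY_K hf; apply: eqY_sym; exact: theta_nat.
Qed.

Lemma theta_ker (c : ZG (F Y)) : KI c -> K (theta c).
Proof.
move=> hc; apply: (hc (fun c => K (theta c))).
- by apply/eqY1; exact: theta0.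
- move=> a b ha hb; apply: eqY_K (thetaB a b) _.
  by apply: KM => //; apply: KV.
- by move=> s [u hu ->]; apply: theta_gen.
Qed.

Lemma theta_psi (y : F Y) : eqY (theta (<< y >> - << 1%g >>)) y.
Proof.
rewrite thetaB !thetaU /= expg1 invg1 mulg1; reflexivity.
Qed.

End Obj.
End Main.

Theorem proposition8p5 (C : pointed_cat) (F : gr_functor C) :
  reduced F ->
  exists theta : forall X : C, ZG (F X) -> F X, T1_natural_iso theta.
Proof.
move=> hred; exists (@theta C F); split.
- move=> X a b _ _ hab.
  have h := theta_ker hred hab.
  exact: (eqY_K (eqY_sym (thetaB hred a b)) h).
- by move=> X a b _ _; apply: thetaD.
- move=> X a b ha hb h.
  have h1 := psi_eq hred h.
  apply: (eqI_trans (eqI_sym (psi_theta hred ha))).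
  exact: (eqI_trans h1 (psi_theta hred hb)).
- move=> X y; exists (<< y >> - << 1%g >>)%R; last exact: theta_psi.
  rewrite /IF /aug_ideal !(augmD, augmN, augmU); lia.
- split.
  + by move=> X Y f a _; apply: theta_nat.
  + by move=> X x; apply: theta_psi.
Qed.
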